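(* Let $R$ be a Bezout domain satisfying the Dubrovin–Komarnytsky (D-K) condition. If $a,b\in R$ satisfy $RaR=R$ and $RbR=R$, then $RabR=R$.
   Context: All rings are associative with nonzero identity. A Bezout domain is a domain in which every finitely generated right ideal and every finitely generated left ideal is principal. For $x\in R$, $RxR$ denotes the two-sided ideal generated by $x$. A nonzero element $a$ is invariant if $aR=Ra$. $R$ satisfies the Dubrovin condition if for every $a\in R$ there is $a_*\in R$ with $RaR=a_*R=Ra_*$. A domain $R$ satisfies the Komarnytsky condition if whenever $a$ is invariant and $a=bc$ with $b,c\in R$, both $b$ and $c$ are invariant. The D-K condition means that both the Dubrovin and the Komarnytsky conditions hold. *)

(* Defs.v *)
From HB Require Import structures.
From mathcomp Require Import all_boot all_order all_algebra.
Set Implicit Arguments. Unset Strict Implicit. Unset Printing Implicit Defensive.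
Import GRing.Theory.
Local Open Scope ring_scope.

Definition is_domain (R : nzRingType) : Prop :=
  forall x y : R, x * y = 0 -> x = 0 \/ y = 0.

Definition in_right_ideal (R : nzRingType) (n : nat) (g : 'I_n -> R) (z : R) : Prop :=
  exists c : 'I_n -> R, z = \sum_(i < n) g i * c i.

Definition in_left_ideal (R : nzRingType) (n : nat) (g : 'I_n -> R) (z : R) : Prop :=
  exists c : 'I_n -> R, z = \sum_(i < n) c i * g i.

Definition in_rprinc (R : nzRingType) (d z : R) : Prop := exists t, z = d * t.
Definition in_lprinc (R : nzRingType) (d z : R) : Prop := exists t, z = t * d.

Definition in_RxR (R : nzRingType) (x z : R) : Prop :=
  exists (n : nat) (r s : 'I_n -> R), z = \sum_(i < n) r i * x * s i.

Definition is_bezout_domain (R : nzRingType) : Prop :=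
  is_domain R /\
  (forall (n : nat) (g : 'I_n -> R), exists d : R,
      forall z, in_right_ideal g z <-> in_rprinc d z) /\
  (forall (n : nat) (g : 'I_n -> R), exists d : R,
      forall z, in_left_ideal g z <-> in_lprinc d z).

Definition invariant (R : nzRingType) (a : R) : Prop :=
  a <> 0 /\ (forall z, in_rprinc a z <-> in_lprinc a z).

Definition dubrovin (R : nzRingType) : Prop :=
  forall a : R, exists a_star : R,
    forall z, (in_RxR a z <-> in_rprinc a_star z) /\
              (in_RxR a z <-> in_lprinc a_star z).

Definition komarnytsky (R : nzRingType) : Prop :=
  forall a b c : R, invariant a -> a = b * c -> invariant b /\ invariant c.

Definition DK_condition (R : nzRingType) : Prop := dubrovin R /\ komarnytsky R.

(* Main.v *)
Require Import Defs.
From mathcomp Require Import all_boot all_order all_algebra.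
Local Open Scope ring_scope.
Import GRing.Theory.

Lemma RxR_lp (R : nzRingType) (d x : R)
  (hd : forall z, in_rprinc d z <-> in_lprinc d z) :
  in_lprinc d x -> forall z, in_RxR x z -> in_lprinc d z.
Proof.
move=> hx z [n [r [s ->]]].
apply: (big_ind (fun w => in_lprinc d w)).
- by exists 0; rewrite mul0r.
- by move=> u v [t1 ->] [t2 ->]; exists (t1 + t2); rewrite mulrDl.
- move=> i _.
  have [t ht] := hx.
  have : in_rprinc d (r i * x) by apply/hd; exists (r i * t); rewrite ht mulrA.
  case=> t' ->. apply/hd. by exists (t' * s i); rewrite mulrA.
Qed.

Theorem proposition3p4 (R : nzRingType) (hB : is_bezout_domain R) (hDK : DK_condition R)
  (a b : R) (ha : forall z : R, in_RxR a z) (hb : forall z : R, in_RxR b z) :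
  forall z : R, in_RxR (a * b) z.
Proof.
have [hdom [_ hL]] := hB.
have [hD hK] := hDK.
have [c hc] := hD (a * b).
have hcinv : forall z, in_rprinc c z <-> in_lprinc c z.
  by move=> z; split => h; [apply/(proj1 (proj2 (hc z))); apply/(proj2 (proj1 (hc z))) | apply/(proj1 (proj1 (hc z))); apply/(proj2 (proj2 (hc z)))].
have hab : in_RxR (a * b) (a * b).
  exists 1%N, (fun _ => 1), (fun _ => 1).
  by rewrite big_ord1 mul1r mulr1.
have hnz : forall x : R, (forall z, in_RxR x z) -> x <> 0.
  move=> x hx x0.
  have [n [r [s h1]]] := hx 1.
  move: h1; rewrite x0 big1 ?oner_eq0 => [h1|i _]; last by rewrite mulr0 mul0r.
  by move/eqP: h1; rewrite oner_eq0.
have c0 : c <> 0.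
  move=> c0; have [t ht] := proj1 (proj1 (hc _)) hab.
  rewrite c0 mul0r in ht.
  by case: (hdom _ _ ht) => h; [apply: (hnz a ha) | apply: (hnz b hb)].
have cinv : Defs.invariant c by split.
have cin : in_RxR (a * b) c by apply/(proj2 (proj1 (hc c))); exists 1; rewrite mulr1.
have [t habc] := proj1 (proj2 (hc _)) hab.
pose g : 'I_2 -> R := fun i => if val i == 0%N then a else c.
have [d hd] := hL 2%N g.
have [u hu] : in_lprinc d c.
  apply: (proj1 (hd c)); exists (fun i => if val i == 0%N then 0 else 1).
  by rewrite !big_ord_recr big_ord0 /g /= add0r mul0r mul1r add0r.
have [_ dinv] := (hK c u d cinv hu).2.
have [v hv] : in_lprinc d a.
  apply: (proj1 (hd a)); exists (fun i => if val i == 0%N then 1 else 0).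
  by rewrite !big_ord_recr big_ord0 /g /= add0r mul0r mul1r addr0.
have h1d : in_lprinc d 1.
  apply: (RxR_lp _ _ _ dinv _ 1 (ha 1)); by exists v.
have [cf hcf] := proj2 (hd 1) h1d.
rewrite !big_ord_recr big_ord0 /g /= add0r in hcf.
have hbc : in_lprinc c b.
  have : in_rprinc c (c * b) by exists b.
  move/hcinv=> [w hw].
  exists (cf (widen_ord (m:=2) (leqnSn 1) ord_max) * t + cf ord_max * w).
  by rewrite -[b]mul1r hcf mulrDl !mulrDl -!mulrA -habc hw.
have h1c : in_lprinc c 1 by exact: (RxR_lp _ _ _ hcinv hbc 1 (hb 1)).
move=> z; apply/(proj2 (proj2 (hc z))).
have [e he] := h1c.
by exists (z * e); rewrite -mulrA -he mulr1.
Qed.
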